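(* Let $n$ and $k$ be integers with $n\ge 1$. Then $$\mathfrak C_{2n}^{(k)}=\sum_{m=1}^{n}\frac{(-4)^{n-m}}{(2m+1)^k}\left[\!\!\left[n\atop m\right]\!\!\right],$$ where for $m=1,2,\dots,n$ $$\left[\!\!\left[n\atop m\right]\!\!\right]=\left[n\atop m\right]^2-2\left[n\atop m-1\right]\left[n\atop m+1\right]+2\left[n\atop m-2\right]\left[n\atop m+2\right]-\cdots+2(-1)^{m-1}\left[n\atop 1\right]\left[n\atop 2m-1\right],$$ that is, $\left[\!\!\left[n\atop m\right]\!\!\right]=\left[n\atop m\right]^2+2\sum_{j=1}^{m-1}(-1)^j\left[n\atop m-j\right]\left[n\atop m+j\right]$, and $\left[\!\!\left[n\atop 0\right]\!\!\right]=0$.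
   Context: For an integer $k$, the polylogarithm factorial function with level $2$ is ${\rm Lif}_{2,k}(z)=\sum_{m=0}^\infty\frac{z^{2m}}{(2m)!(2m+1)^k}$, and the poly-Cauchy numbers with level $2$, $\mathfrak C_n^{(k)}$, are defined by the generating function ${\rm Lif}_{2,k}({\rm arcsinh}\,t)=\sum_{n=0}^\infty\mathfrak C_n^{(k)}\frac{t^n}{n!}$, where ${\rm arcsinh}$ is the inverse hyperbolic sine. Here $\left[n\atop m\right]$ denotes the unsigned Stirling numbers of the first kind, defined by $x(x+1)\cdots(x+n-1)=\sum_{m=0}^n\left[n\atop m\right]x^m$, with $\left[n\atop m\right]=0$ for $m>n$. *)

(* Defs.v *)
(* formal power series computed via truncated polynomials over rat. *)
From mathcomp Require Import all_boot all_order all_algebra.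
Set Implicit Arguments. Unset Strict Implicit. Unset Printing Implicit Defensive.
Import Order.TTheory GRing.Theory Num.Theory.
Local Open Scope ring_scope.

Definition stirling1 (n m : nat) : int :=
  (\prod_(i < n) ('X + (i%:R)%:P : {poly int}))`_m.

Definition dstirling (n m : nat) : int :=
  stirling1 n m ^+ 2
  + 2 * \sum_(1 <= j < m) (-1) ^+ j * stirling1 n (m - j) * stirling1 n (m + j).

Definition asinh_coef (i : nat) : rat :=
  if odd i then
    let j := i./2 in
    (-1) ^+ j * ((2 * j)`!)%:R / ((4 ^ j * (j`!) ^ 2 * (2 * j + 1))%:R)
  else 0.

Definition asinh_poly (N : nat) : {poly rat} := \poly_(i < N.+1) asinh_coef i.

(* coefficient of z^(2m) in Lif_{2,k}(z) = \sum_m z^(2m) / ((2m)! (2m+1)^k) *)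
Definition lif2_coef (k : int) (m : nat) : rat :=
  1 / (((2 * m)`!)%:R * ((2 * m + 1)%:R : rat) ^ k).

(* Poly-Cauchy numbers with level 2: Lif_{2,k}(arcsinh t) = \sum_N C_N t^N / N!,
   as a formal composition (arcsinh has zero constant term, so only the
   terms with 2m <= N and coefficients of arcsinh up to t^N contribute). *)
Definition polyCauchy2 (k : int) (N : nat) : rat :=
  (N`!)%:R * \sum_(m < N.+1) lif2_coef k m * (asinh_poly N ^+ (2 * m))`_N.

(* Main.v *)
Require Import Defs.
From mathcomp Require Import all_boot all_order all_algebra.
From mathcomp Require Import ring lra zify.
Set Implicit Arguments. Unset Strict Implicit. Unset Printing Implicit Defensive.
Import Order.TTheory GRing.Theory Num.Theory.
Local Open Scope ring_scope.


Lemma half_odd j : ((2 * j + 1)./2 = j)%N.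
Proof. by rewrite addn1 mul2n /= uphalf_double. Qed.

Lemma acoef_odd j : asinh_coef (2 * j + 1) =
  (-1) ^+ j * ((2 * j)`!)%:R / (4%:R ^+ j * (j`!)%:R ^+ 2 * (2 * j + 1)%:R).
Proof.
rewrite /asinh_coef oddD oddM /= half_odd.
by rewrite !natrM !natrX.
Qed.

Lemma acoef_even j : asinh_coef (2 * j) = 0.
Proof. by rewrite /asinh_coef oddM. Qed.

Lemma acoef_rec i : (i.+2 * i.+1)%:R * asinh_coef i.+2 + (i ^ 2)%:R * asinh_coef i = 0.
Proof.
have := odd_double_half i; case: (odd i) => /= Hi.
- set j := i./2 in Hi.
  have -> : i = (2 * j + 1)%N by rewrite -Hi mul2n addnC.
  have -> : ((2 * j + 1).+2 = 2 * j.+1 + 1)%N by lia.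
  rewrite !acoef_odd.
  have -> : ((2 * j.+1) = (2 * j).+1.+1)%N by lia.
  idtac.
  rewrite !factS exprS.
  rewrite !(natrM, natrD, natrX, factS, mulrS, exprS) /=.
  have h1 : ((2 * j)`!)%:R != 0 :> rat by rewrite pnatr_eq0 -lt0n fact_gt0.
  have h2 : (j`!)%:R != 0 :> rat by rewrite pnatr_eq0 -lt0n fact_gt0.
  have hj : 0 <= j%:R :> rat := ler0n _ _.
  field.
  repeat (apply/andP; split); rewrite ?h2 //; try (apply: expf_neq0); apply: lt0r_neq0; lra.
- set j := i./2 in Hi.
  have -> : i = (2 * j)%N by rewrite -Hi mul2n.
  have -> : ((2 * j).+2 = 2 * j.+1)%N by lia.
  by rewrite !acoef_even !mulr0 addr0.
Qed.

Lemma natS n : n.+1%:R = n%:R + 1 :> rat.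
Proof. by rewrite natr1. Qed.

Lemma coefd (p : {poly rat}) i : p^`()`_i = p`_i.+1 * i.+1%:R.
Proof. by rewrite coef_deriv mulr_natr. Qed.

Definition Eop (p : {poly rat}) := (1 + 'X^2) * p^`()^`() + 'X * p^`().

Lemma coefEop p i : (Eop p)`_i = (i.+2 * i.+1)%:R * p`_i.+2 + (i ^ 2)%:R * p`_i.
Proof.
rewrite /Eop mulrDl mul1r !coefD coefXnM coefXM !coefd.
case: i => [|[|i]] /=; rewrite ?subn0 ?subSS ?subn0 /=.
- rewrite !(natrM, natrX, natS). ring.
- rewrite !(natrM, natrX, natS). ring.
- rewrite !(natrM, natrX, natS). ring.
Qed.

Definition eqd (d : nat) (p q : {poly rat}) := forall i, (i < d)%N -> p`_i = q`_i.

Lemma eqd_mul d p q r s : eqd d p q -> eqd d r s -> eqd d (p * r) (q * s).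
Proof.
move=> Hpq Hrs i Hi; rewrite !coefM; apply: eq_bigr => j _.
rewrite Hpq ?Hrs //.
- by apply: leq_ltn_trans Hi; apply: leq_subr.
- by apply: leq_ltn_trans Hi; rewrite -ltnS.
Qed.

Lemma eqd_refl d p : eqd d p p. Proof. by []. Qed.

Lemma eqd_add d p q r s : eqd d p q -> eqd d r s -> eqd d (p + r) (q + s).
Proof. by move=> H1 H2 i Hi; rewrite !coefD H1 ?H2. Qed.

Lemma eqd_le d e p q : (e <= d)%N -> eqd d p q -> eqd e p q.
Proof. by move=> He H i Hi; apply: H; apply: leq_trans He. Qed.

Definition Ap j : {poly rat} := \prod_(l < j) ('X + ((2 * l)%:R)%:P).
Definition Bp j : {poly rat} := \prod_(l < j) ('X - ((2 * l)%:R)%:P).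
Definition Pp j := Ap j * Bp j.

Lemma Ap_rec j : Ap j.+1 = Ap j * ('X + ((2 * j)%:R)%:P).
Proof. by rewrite /Ap big_ord_recr. Qed.
Lemma Bp_rec j : Bp j.+1 = Bp j * ('X - ((2 * j)%:R)%:P).
Proof. by rewrite /Bp big_ord_recr. Qed.

Lemma Pp_rec j : Pp j.+1 = Pp j * ('X^2 - (((2 * j) ^ 2)%:R)%:P).
Proof.
rewrite /Pp Ap_rec Bp_rec natrX rmorphXn /=; ring.
Qed.

Lemma coefPp_rec j m : (Pp j.+1)`_m =
  (if m is m'.+2 then (Pp j)`_m' else 0) - ((2 * j) ^ 2)%:R * (Pp j)`_m.
Proof.
rewrite Pp_rec mulrBr coefB coefMXn coefMC mulrC.
by case: m => [|[|m]] //=; rewrite !subSS subn0.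
Qed.

Section Y.
Variable N : nat.
Hypothesis HN : (1 <= N)%N.
Let y := asinh_poly N.

Lemma coef_y i : y`_i = if (i <= N)%N then asinh_coef i else 0.
Proof. by rewrite /y /asinh_poly coef_poly ltnS. Qed.

Lemma F1 : eqd N.-1 (Eop y) 0.
Proof.
move=> i Hi; rewrite coefEop coef0 !coef_y.
have -> : (i.+2 <= N)%N by lia.
have -> : (i <= N)%N by lia.
exact: acoef_rec.
Qed.

Let h := (1 + 'X^2) * y^`() ^+ 2.

Lemma h_deriv : h^`() = 2%:R * y^`() * Eop y.
Proof.
rewrite /h /Eop derivM !derivD derivXn deriv_exp.
rewrite -polyC1 derivC polyC1 /= expr1 !mulr2n add0r.
ring.
Qed.

Lemma acoef1 : asinh_coef 1 = 1.
Proof. by rewrite /asinh_coef /= divr1. Qed.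

Lemma F2 : eqd N h 1.
Proof.
move=> [|i] Hi.
- rewrite coef0M coefD coef1 coefXn /= expr2 coef0M coefd coef_y HN acoef1.
  by rewrite !mulr1 addr0.
- have := congr1 (fun p : {poly rat} => p`_i) h_deriv; rewrite /= coefd.
  have -> : (2%:R * y^`() * Eop y)`_i = (2%:R * y^`() * 0)`_i.
    by apply: (eqd_mul (d := N.-1)); [exact: eqd_refl | exact: F1 | lia].
  rewrite mulr0 coef0 coef1 /= => /eqP; rewrite mulf_eq0 pnatr_eq0 orbF.
  by move/eqP.
Qed.

Lemma F3_exact m : Eop (y ^+ m.+2) =
  (m.+2 * m.+1)%:R * y ^+ m * h + (m.+2)%:R * y ^+ m.+1 * Eop y.
Proof.
rewrite /Eop /h !deriv_exp /= !derivMn derivM deriv_exp /=.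
ring.
Qed.

Lemma crec2 m i : (i.+2 <= N)%N ->
  (i.+2 * i.+1)%:R * (y ^+ m.+2)`_i.+2 + (i ^ 2)%:R * (y ^+ m.+2)`_i =
  (m.+2 * m.+1)%:R * (y ^+ m)`_i.
Proof.
move=> Hi; rewrite -coefEop F3_exact.
have -> : (((m.+2 * m.+1)%:R * y ^+ m * h + (m.+2)%:R * y ^+ m.+1 * Eop y) : {poly rat})`_i
   = (((m.+2 * m.+1)%:R * y ^+ m * 1 + (m.+2)%:R * y ^+ m.+1 * 0) : {poly rat})`_i.
  apply: (eqd_add (d := N.-1)); [apply: eqd_mul => //; apply: (eqd_le (d := N)) => //; [lia | exact: F2]
   | apply: eqd_mul => //; exact: F1 | lia].
by rewrite mulr1 mulr0 addr0 -polyC_natr coefCM.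
Qed.

Lemma crec01 m i : (m < 2)%N -> (i.+2 <= N)%N ->
  (i.+2 * i.+1)%:R * (y ^+ m)`_i.+2 + (i ^ 2)%:R * (y ^+ m)`_i = 0.
Proof.
case: m => [|[|//]] _ Hi.
- by rewrite expr0 !coef1 /= mulr0 add0r; case: i {Hi} => [|i] /=; rewrite ?mulr0 ?mul0r.
- by rewrite expr1 -coefEop F1 ?coef0 //; lia.
Qed.

Lemma Qlem j : (2 * j <= N)%N -> forall m,
  (y ^+ m)`_(2 * j) * ((2 * j)`!)%:R / (m`!)%:R = (Pp j)`_m.
Proof.
elim: j => [|j IH] Hj m.
- rewrite muln0 -horner_coef0 horner_exp horner_coef0 coef_y /= /asinh_coef /=.
  rewrite /Pp /Ap /Bp !big_ord0 mul1r coef1 expr0n.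
  by case: m => [|m] /=; rewrite ?mul0r ?mul1r ?divr1.
- have Hj' : (2 * j <= N)%N by lia.
  have -> : (2 * j.+1 = (2 * j).+2)%N by lia.
  rewrite coefPp_rec.
  have Hi : ((2 * j).+2 <= N)%N by lia.
  move: (IH Hj') Hi; set i := (2 * j)%N => IHm Hi.
  rewrite !factS.
  case: m => [|[|m]].
  + have E := crec01 (m := 0) (isT : (0 < 2)%N) Hi.
    have E' : (i.+2 * i.+1)%:R * (y ^+ 0)`_i.+2 = - ((i ^ 2)%:R * (y ^+ 0)`_i).
      by apply/eqP; rewrite -subr_eq0 opprK E.
    rewrite -IHm.
    have -> : (y ^+ 0)`_i.+2 * (i.+2 * (i.+1 * i`!))%:R / (0`!)%:R =
       ((i.+2 * i.+1)%:R * (y ^+ 0)`_i.+2) * (i`!)%:R / (0`!)%:R.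
      by rewrite !natrM; ring.
    rewrite E'; ring.
  + have E := crec01 (m := 1) (isT : (1 < 2)%N) Hi.
    have E' : (i.+2 * i.+1)%:R * (y ^+ 1)`_i.+2 = - ((i ^ 2)%:R * (y ^+ 1)`_i).
      by apply/eqP; rewrite -subr_eq0 opprK E.
    rewrite -IHm.
    have -> : (y ^+ 1)`_i.+2 * (i.+2 * (i.+1 * i`!))%:R / (1`!)%:R =
       ((i.+2 * i.+1)%:R * (y ^+ 1)`_i.+2) * (i`!)%:R / (1`!)%:R.
      by rewrite !natrM; ring.
    rewrite E'; ring.
  + have E := crec2 m Hi.
    have E' : (i.+2 * i.+1)%:R * (y ^+ m.+2)`_i.+2 =
        (m.+2 * m.+1)%:R * (y ^+ m)`_i - (i ^ 2)%:R * (y ^+ m.+2)`_i.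
      by rewrite -E addrK.
    rewrite -!IHm.
    have -> : (y ^+ m.+2)`_i.+2 * (i.+2 * (i.+1 * i`!))%:R / (m.+2)`!%:R =
       ((i.+2 * i.+1)%:R * (y ^+ m.+2)`_i.+2) * (i`!)%:R / (m.+2)`!%:R.
      by rewrite !natrM; ring.
    rewrite E' !factS.
    have hm : (m`!)%:R != 0 :> rat by rewrite pnatr_eq0 -lt0n fact_gt0.
    rewrite !natrM !natS.
    have hm0 : 0 <= m%:R :> rat := ler0n _ _.
    field.
    repeat (apply/andP; split); rewrite ?hm //; apply: lt0r_neq0; lra.
Qed.

End Y.


Definition sr j a : rat := (stirling1 j a)%:~R.

Lemma sr_rec j a : sr j.+1 a = (if a is a'.+1 then sr j a' else 0) + j%:R * sr j a.
Proof.
rewrite /sr /stirling1 big_ord_recr /= mulrDr coefD coefMX coefMC.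
by case: a => [|a] /=; rewrite ?add0r ?intrD intrM /= natz mulrC.
Qed.

Lemma sr_base a : sr 0 a = (a == 0)%:R.
Proof. by rewrite /sr /stirling1 big_ord0 coef1; case: a. Qed.

Lemma sr_big j a : (j < a)%N -> sr j a = 0.
Proof.
elim: j a => [|j IH] a Ha; first by rewrite sr_base; case: a Ha.
rewrite sr_rec; case: a Ha => [//|a] Ha.
by rewrite !IH ?mulr0 ?addr0 //; lia.
Qed.

Lemma sr_0 j : sr j.+1 0 = 0.
Proof.
elim: j => [|j IH]; first by rewrite sr_rec sr_base mul0r add0r.
by rewrite sr_rec IH mulr0 add0r.
Qed.

Lemma two_neq0 a : (2%:R : rat) ^+ a != 0.
Proof. by rewrite expf_neq0 // pnatr_eq0. Qed.

Lemma coefA j a : (Ap j)`_a = 2%:R ^+ j * sr j a / 2%:R ^+ a.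
Proof.
elim: j a => [|j IH] a.
- by rewrite /Ap big_ord0 coef1 sr_base; case: a => [|a] /=; rewrite ?mulr0 ?mul0r ?expr0 ?mul1r ?divr1.
- rewrite Ap_rec mulrDr coefD coefMX coefMC sr_rec.
  have h2 := two_neq0.
  case: a => [|a] /=; rewrite !IH.
  + rewrite ?exprS ?natrM. field. all: try exact: h2; try done.
  + rewrite ?exprS ?natrM. field. all: try exact: h2; try done.
Qed.

Lemma coefB j a : (Bp j)`_a = (-1) ^+ (j + a) * 2%:R ^+ j * sr j a / 2%:R ^+ a.
Proof.
elim: j a => [|j IH] a.
- by rewrite /Bp big_ord0 coef1 sr_base; case: a => [|a] /=; rewrite ?mulr0 ?mul0r ?expr0 ?mul1r ?divr1.
- rewrite Bp_rec mulrBr coefB coefMX coefMC sr_rec.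
  have h2 := two_neq0.
  case: a => [|a] /=; rewrite !IH ?addn0 ?addSn ?addnS.
  + rewrite ?exprS ?natrM. field. all: try exact: h2; try done.
  + rewrite ?exprS ?natrM. field. all: try exact: h2; try done.
Qed.

Lemma four j : (4%:R : rat) ^+ j = 2%:R ^+ j * 2%:R ^+ j.
Proof. by rewrite -exprMn -natrM. Qed.

Lemma sgnB m a : (a <= m)%N -> (-1) ^+ (m - a) = (-1) ^+ m * (-1) ^+ a :> rat.
Proof. by move=> H; rewrite -signr_odd oddB // signr_addb !signr_odd. Qed.

Lemma coefPp j m : (Pp j)`_(2 * m) = 4%:R ^+ j * (-1) ^+ j / 4%:R ^+ m *
  \sum_(a < (2 * m).+1) (-1) ^+ a * sr j a * sr j (2 * m - a).
Proof.
rewrite /Pp coefM mulr_sumr; apply: eq_bigr => -[a Ha] _ /=.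
rewrite coefA coefB.
have Ha' : (a <= 2 * m)%N by rewrite -ltnS.
have e : (4%:R : rat) ^+ m = 2%:R ^+ a * 2%:R ^+ (2 * m - a).
  by rewrite -exprD subnKC // exprM -natrX.
rewrite e exprD sgnB // [(-1) ^+ (2 * m)]exprM sqrrN !expr1n mul1r four.
have := two_neq0 a; have := two_neq0 (2 * m - a); have := two_neq0 j.
move=> h1 h2 h3.
field.
by rewrite h2 h3.
Qed.

Lemma symsum (s : nat -> rat) m : s 0%N = 0 -> (1 <= m)%N ->
  \sum_(a < (2 * m).+1) (-1) ^+ a * s a * s (2 * m - a)%N =
  (-1) ^+ m * (s m ^+ 2 + 2 * \sum_(1 <= j < m) (-1) ^+ j * s (m - j)%N * s (m + j)%N).
Proof.
move=> s0 m1.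
set g := fun a => (-1) ^+ a * s a * s (2 * m - a)%N.
rewrite -(big_mkord xpredT g) (big_cat_nat _ (n := m)) //=; last by lia.
rewrite big_ltn; last by lia.
rewrite [X in _ + X]big_ltn; last by lia.
rewrite (big_addn 1 _ m).
have -> : ((2 * m).+1 - m = m.+1)%N by lia.
rewrite big_nat_recr //=.
rewrite [X in _ + X + _]big_nat_rev /=.
have -> : g 0%N = 0 by rewrite /g s0 mulr0 mul0r.
have -> : g (m + m)%N = 0.
  by rewrite /g (_ : (2 * m - (m + m) = 0)%N) ?s0 ?mulr0 //; lia.
rewrite add0r addr0 addrCA -big_split /= mulrDr mulr_sumr mulr_sumr; congr (_ + _).
- rewrite /g; have -> : (2 * m - m = m)%N by lia.
  by rewrite expr2 mulrA.
- rewrite big_nat_cond [in RHS]big_nat_cond; apply: eq_bigr => i /andP [/andP [Hi1 Hi2] _].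
  rewrite /g.
  have -> : (1 + m - i.+1 = m - i)%N by lia.
  have -> : (2 * m - (m - i) = m + i)%N by lia.
  have -> : (i + m = m + i)%N by lia.
  have -> : (2 * m - (m + i) = m - i)%N by lia.
  rewrite sgnB; last by lia.
  rewrite exprD.
  ring.
Qed.



Lemma dst_cast n m : (dstirling n m)%:~R =
  sr n m ^+ 2 + 2 * \sum_(1 <= j < m) (-1) ^+ j * sr n (m - j)%N * sr n (m + j)%N :> rat.
Proof.
rewrite /dstirling /sr intrD !intrM rmorph_sum /= expr2; congr (_ + _); congr (_ * _).
apply: eq_bigr => j _; by rewrite !intrM rmorphXn rmorphN1.
Qed.

Lemma Pp_big n m : (n < m)%N -> (Pp n)`_(2 * m) = 0.
Proof.
move=> Hm; rewrite coefPp big1 ?mulr0 // => -[a Ha] _ /=.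
case: (leqP a n) => Han.
- by rewrite (sr_big (a := (2 * m - a)%N)) ?mulr0 //; lia.
- by rewrite (sr_big Han) ?mulr0 ?mul0r.
Qed.

Lemma Pp_zero n : (1 <= n)%N -> (Pp n)`_(2 * 0) = 0.
Proof.
case: n => [//|n] _; rewrite coefPp big_ord1 /= sr_0 ?mulr0 ?mul0r ?mulr0 //.
Qed.

Lemma Pp_mid n m : (1 <= m)%N -> (m <= n)%N ->
  (Pp n)`_(2 * m) = (-4 : rat) ^+ (n - m) * (dstirling n m)%:~R.
Proof.
move=> m1 mn.
have n1 : (1 <= n)%N by lia.
rewrite coefPp symsum //; last by case: n n1 {mn} => [//|n] _; rewrite sr_0.
rewrite dst_cast.
have [d ->] : exists d, n = (m + d)%N by exists (n - m)%N; lia.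
rewrite addKn.
set D := (X in _ = _ * X).
rewrite !exprD.
have h4 : (4%:R : rat) ^+ m != 0 by rewrite expf_neq0 // pnatr_eq0.
have hs : (-1) ^+ m * (-1) ^+ m = 1 :> rat by rewrite -expr2 sqrr_sign.
have e4 : (-4 : rat) ^+ d = (-1) ^+ d * 4%:R ^+ d by rewrite -exprMn mulN1r.
rewrite -/D e4.
transitivity (((-1) ^+ m * (-1) ^+ m) * ((-1) ^+ d * 4%:R ^+ d * D)).
  by field.
by rewrite hs mul1r.
Qed.

Unset Implicit Arguments.

Theorem theorem1 (n : nat) (k : int) : (1 <= n)%N ->
  polyCauchy2 k (2 * n) =
  \sum_(1 <= m < n.+1)
     ((-4 : rat) ^+ (n - m) / ((2 * m + 1)%:R : rat) ^ k) * (dstirling n m)%:~R.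
Proof.
move=> n1.
have HN : (0 < 2 * n)%N by lia.
rewrite /polyCauchy2 mulr_sumr.
have T : forall m : nat, ((2 * n)`!)%:R * (lif2_coef k m * (asinh_poly (2 * n) ^+ (2 * m))`_(2 * n))
   = (Pp n)`_(2 * m) / ((2 * m + 1)%:R : rat) ^ k.
  move=> m; rewrite /lif2_coef -(Qlem HN (leqnn _) (2 * m)) mul1r invfM; ring.
under eq_bigr => m _ do rewrite T.
rewrite -(big_mkord xpredT (fun m => (Pp n)`_(2 * m) / ((2 * m + 1)%:R : rat) ^ k)).
rewrite (big_cat_nat _ (n := n.+1)) //=; last by lia.
rewrite [X in _ + X]big1_seq ?addr0; last first.
  move=> m /andP [_]; rewrite mem_index_iota => /andP [Hm _].
  by rewrite Pp_big ?mul0r.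
rewrite big_ltn // Pp_zero // mul0r add0r.
rewrite big_nat_cond [RHS]big_nat_cond; apply: eq_bigr => m /andP [/andP [m1 mn] _].
rewrite Pp_mid //.
by rewrite mulrAC.
Qed.
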